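(* Let $\mathcal{W}$ be a set and let $(d_\epsilon)_{\epsilon\ge0}$ be a family of functions $d_\epsilon:\mathcal{W}\times\mathcal{W}\to\mathbb{R}$ such that for each fixed $x,y\in\mathcal{W}$ the map $\epsilon\mapsto d_\epsilon(x,y)$ is right continuous and weakly decreasing, and each $d_\epsilon$ is symmetric and satisfies the triangle inequality. For $k>0$ define $d^k(x,y)=\inf\{\epsilon\ge0:d_\epsilon(x,y)\le k\epsilon\}$. If $y,\tilde y\in\mathcal{W}$ and there exists $\delta>0$ with $d_\delta(y,\tilde y)=0$, then for every $x\in\mathcal{W}$, \[ |d^k(x,y)-d^k(x,\tilde y)|\le\delta. \] *)

(* Defs.v *)
From HB Require Import structures.
From mathcomp Require Import all_boot all_order all_algebra.
From mathcomp Require Import all_classical all_reals all_analysis.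
Set Implicit Arguments. Unset Strict Implicit. Unset Printing Implicit Defensive.
Import Order.TTheory GRing.Theory Num.Theory.
Import numFieldNormedType.Exports.
Local Open Scope classical_set_scope.
Local Open Scope ring_scope.

Definition dk {R : realType} {W : Type} (d : R -> W -> W -> R) (k : R)
  (x y : W) : R :=
  inf [set e : R | 0 <= e /\ d e x y <= k * e].

(* Main.v *)
Require Import Defs.
From HB Require Import structures.
From mathcomp Require Import all_boot all_order all_algebra.
From mathcomp Require Import all_classical all_reals all_analysis.
Import Order.TTheory GRing.Theory Num.Theory.
Import numFieldNormedType.Exports.
Local Open Scope classical_set_scope.
Local Open Scope ring_scope.

Lemma dk_key (R : realType) (W : Type) (d : R -> W -> W -> R)
  (hdec : forall (x y : W) (e1 e2 : R), 0 <= e1 -> e1 <= e2 ->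
     d e2 x y <= d e1 x y)
  (htri : forall (x y z : W) (e : R), 0 <= e -> d e x z <= d e x y + d e y z)
  (k : R) (hk : 0 < k) (y1 y2 : W) (delta : R) (hdelta : 0 < delta)
  (h : forall e, delta <= e -> d e y1 y2 <= 0) (x : W) :
  dk d k x y2 <= dk d k x y1 + delta.
Proof.
rewrite -lerBlDr /dk; apply: lb_le_inf.
  exists (Num.max 0 (d 0 x y1 / k)); split; first by rewrite le_max lexx.
  apply: (le_trans (hdec _ _ _ _ (lexx 0) _)); first by rewrite le_max lexx.
  rewrite -(ler_pM2l (elimT idP (etrans (invr_gt0 k) hk))) mulKf ?gt_eqF // mulrC.
  by rewrite le_max lexx orbT.
move=> e [e0 he]; rewrite lerBlDr.
have Hlb : has_lbound [set e : R | 0 <= e /\ d e x y2 <= k * e].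
  by exists 0 => z [].
apply: (ge_inf Hlb); split; first by rewrite addr_ge0 // ltW.
have ed : 0 <= e + delta by rewrite addr_ge0 // ltW.
apply: (le_trans (htri _ y1 _ _ ed)).
rewrite -[k * _]addr0; apply: lerD; last by apply: h; rewrite lerDr.
apply: (le_trans (hdec _ _ _ _ e0 _)); first by rewrite lerDl ltW.
apply: (le_trans he); rewrite ler_pM2l // lerDl ltW //.
Qed.

Theorem theorem4p10 (R : realType) (W : Type) (d : R -> W -> W -> R)
  (hrc : forall (x y : W) (e : R), 0 <= e ->
     (fun t => d t x y) @ e^'+ --> d e x y)
  (hdec : forall (x y : W) (e1 e2 : R), 0 <= e1 -> e1 <= e2 ->
     d e2 x y <= d e1 x y)
  (hsym : forall (x y : W) (e : R), 0 <= e -> d e x y = d e y x)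
  (htri : forall (x y z : W) (e : R), 0 <= e -> d e x z <= d e x y + d e y z)
  (k : R) (hk : 0 < k) (y yt : W) (delta : R) (hdelta : 0 < delta)
  (h0 : d delta y yt = 0) :
  forall x : W, `|dk d k x y - dk d k x yt| <= delta.
Proof.
move=> x.
have h1 : forall e, delta <= e -> d e y yt <= 0.
  by move=> e he; rewrite -h0; apply: hdec => //; rewrite ltW.
have h2 : forall e, delta <= e -> d e yt y <= 0.
  move=> e he; rewrite -hsym; first exact: h1.
  by apply: le_trans he; rewrite ltW.
rewrite ler_norml; apply/andP; split.
  rewrite lerNl opprB lerBlDr addrC.
  exact: (@dk_key R W d hdec htri k hk y yt delta hdelta h1 x).
rewrite lerBlDr addrC.
exact: (@dk_key R W d hdec htri k hk yt y delta hdelta h2 x).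
Qed.
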